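(* Let $r$ and $k$ be positive integers with $r+k\equiv 0\pmod 2$ and $k\le r$, let $H$ be the complete graph with $V(H)=[r+k]$, and let $\mathbf{E}=(E_0,E_1,E_2)$ be an ordered partition of $E(H)$. If $|E_1|+2|E_2|<2(r+k-1)$, then $H$ contains a perfect matching which is also a good matching for $\mathbf{E}$.
   Context: $[m]=\{1,\dots,m\}$. An ordered partition $(E_0,E_1,E_2)$ of a set $X$ is a triple of pairwise disjoint (possibly empty) sets with union $X$. A matching $M$ of $H$ is a good matching for $\mathbf{E}=(E_0,E_1,E_2)$ if $M\cap E_2=\emptyset$ and $|M\cap E_1|\le 1$. *)

(* Defs.v *)
From mathcomp Require Import all_boot.
Set Implicit Arguments. Unset Strict Implicit. Unset Printing Implicit Defensive.

Definition Kedges (n : nat) : {set {set 'I_n}} := [set e : {set 'I_n} | #|e| == 2].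

Definition ordered_partition (T : finType) (X E0 E1 E2 : {set T}) : Prop :=
  [/\ [disjoint E0 & E1], [disjoint E0 & E2], [disjoint E1 & E2]
    & E0 :|: E1 :|: E2 = X].

Definition is_matching (n : nat) (M : {set {set 'I_n}}) : Prop :=
  M \subset Kedges n /\
  forall e f : {set 'I_n}, e \in M -> f \in M -> e != f -> [disjoint e & f].

Definition is_perfect_matching (n : nat) (M : {set {set 'I_n}}) : Prop :=
  is_matching M /\ forall v : 'I_n, exists2 e, e \in M & v \in e.

Definition good_matching (n : nat) (M E0 E1 E2 : {set {set 'I_n}}) : Prop :=
  M :&: E2 = set0 /\ #|M :&: E1| <= 1.

(* Main.v *)
Require Import Defs.
From mathcomp Require Import all_boot.
From mathcomp Require Import zify.

Definition colv (m a b : nat) :=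
  if a == m then (2*b) %% m else if b == m then (2*a) %% m else (a+b) %% m.

Lemma colvC m a b : a != b -> colv m a b = colv m b a.
Proof.
rewrite /colv => ab; case: eqP => [am|/eqP am]; case: eqP => [bm|/eqP bm] //.
  by subst; rewrite eqxx in ab.
by rewrite addnC.
Qed.

Lemma dbl_inj m y z : odd m -> y < m -> z < m -> (2*y) %% m = (2*z) %% m -> y = z.
Proof.
move=> om.
wlog yz : y z / y <= z => [H|] yl zl e.
  case: (leqP y z) => h; first exact: H.
  by symmetry; apply: H => //; apply: ltnW.
have : m %| z - y.
  rewrite -(@Gauss_dvdr m 2) ?coprimen2 // mulnBr -eqn_mod_dvd ?e //.
  by rewrite leq_mul2l yz orbT.
case: (posnP (z - y)) => [h|h /(dvdn_leq h) h2]; first lia.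
lia.
Qed.

Lemma key m x y z : odd m -> x <= m -> y <= m -> z <= m -> x != y -> x != z ->
  colv m x y = colv m x z -> y = z.
Proof.
move=> om xm ym zm xy xz; rewrite /colv.
case: eqP => [ex|/eqP nx].
  subst x. apply: dbl_inj => //; lia.
have xl : x < m by lia.
case: eqP => [ey|/eqP ny]; case: eqP => [ez|/eqP nz]; try congruence.
- move=> e; have : (x + x == x + z %[mod m]) by rewrite addnn -mul2n e.
  rewrite eqn_modDl !modn_small //; [ |lia]. move/eqP=> h; subst; by rewrite eqxx in xz.
- move=> e; have : (x + y == x + x %[mod m]) by rewrite addnn -mul2n e.
  rewrite eqn_modDl !modn_small //; [ |lia]. move/eqP=> h; subst; by rewrite eqxx in xy.
- move=> e; have : (x + y == x + z %[mod m]) by apply/eqP.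
  rewrite eqn_modDl !modn_small; first (by move/eqP); lia.
Qed.

Definition Mc n (c : nat) : {set {set 'I_n}} :=
  [set e : {set 'I_n} | [exists a : 'I_n, exists b : 'I_n,
     (a != b) && (e == [set a; b]) && (colv n.-1 a b == c)]].

Lemma pair_eq (T : finType) (a b a' b' : T) : a != b -> a' != b' ->
  [set a; b] = [set a'; b'] -> (a = a' /\ b = b') \/ (a = b' /\ b = a').
Proof.
move=> ab ab' e.
have : a \in [set a'; b'] by rewrite -e !inE eqxx.
have : b \in [set a'; b'] by rewrite -e !inE eqxx orbT.
rewrite !inE => /orP [] /eqP hb /orP [] /eqP ha; subst.
- by rewrite eqxx in ab.
- by right.
- by left.
- by rewrite eqxx in ab.
Qed.

Lemma McP n c e : reflect (exists a b : 'I_n, [/\ a != b, e = [set a; b] & colv n.-1 a b = c])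
  (e \in Mc n c).
Proof.
rewrite inE; apply: (iffP idP).
  case/existsP => a; case/existsP => b; case/andP; case/andP => ab /eqP -> /eqP h.
  by exists a, b.
case=> a [b [ab -> h]].
by apply/existsP; exists a; apply/existsP; exists b; rewrite ab eqxx h eqxx.
Qed.

Lemma Mc_uniq n c1 c2 e : e \in Mc n c1 -> e \in Mc n c2 -> c1 = c2.
Proof.
move=> /McP [a [b [ab -> <-]]] /McP [a' [b' [ab' eE <-]]].
case: (pair_eq _ _ _ _ _ ab ab' eE) => [[-> ->]|[-> ->]] //.
by rewrite colvC // eq_sym.
Qed.

Lemma Mc_at n c e x : e \in Mc n c -> x \in e ->
  exists y : 'I_n, [/\ x != y, e = [set x; y] & colv n.-1 x y = c].
Proof.
move=> /McP [a [b [ab -> h]]]; rewrite !inE => /orP [] /eqP ->.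
  by exists b.
exists a; split; first by rewrite eq_sym.
  by rewrite setUC.
by rewrite colvC // eq_sym.
Qed.

Lemma Mc_match n c : odd n.-1 -> is_matching (Mc n c).
Proof.
move=> om; split.
  apply/subsetP => e /McP [a [b [ab -> _]]].
  by rewrite inE cards2 ab.
move=> e f he hf ef.
case: (boolP [disjoint e & f]) => // /pred0Pn [x /andP [/= xe xf]].
have [y [xy ey cy]] := Mc_at _ _ _ _ he xe.
have [z [xz fz cz]] := Mc_at _ _ _ _ hf xf.
have yz : nat_of_ord y = nat_of_ord z.
  have hx := ltn_ord x; have hy := ltn_ord y; have hz := ltn_ord z.
  have a1 : (x : nat) <= n.-1 by lia.
  have a2 : (y : nat) <= n.-1 by lia.
  have a3 : (z : nat) <= n.-1 by lia.
  exact: (@key n.-1 x y z om a1 a2 a3 xy xz (etrans cy (esym cz))).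
move/val_inj: yz => yz; subst.
by rewrite eqxx in ef.
Qed.

Lemma Mc_cover n c (v : 'I_n) : odd n.-1 -> c < n.-1 ->
  exists2 e, e \in Mc n c & v \in e.
Proof.
move=> om cm; set m := n.-1 in om cm *.
have mn : m < n by rewrite /m; case: n v {m om cm} => [[]|].
have vn := ltn_ord v.
have m0 : 0 < m by lia.
case: (eqVneq (v : nat) m) => [vm|vm].
  pose a := if odd c then (c + m)./2 else c./2.
  have [al ea] : a < m /\ (2 * a) %% m = c.
    rewrite /a; case oc: (odd c).
      have := odd_double_half (c + m); rewrite oddD oc om /= -muln2 => h.
      split; first lia.
      have -> : 2 * (c + m)./2 = c + m by lia.
      by rewrite modnDr modn_small.
    have := odd_double_half c; rewrite oc /= -muln2 => h.
    split; first lia.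
    have -> : 2 * c./2 = c by lia.
    by rewrite modn_small.
  have an : a < n by lia.
  exists [set Ordinal an; v]; last by rewrite !inE eqxx orbT.
  apply/McP; exists (Ordinal an), v; split => //.
    apply/negP => /eqP /(congr1 val) /= h; lia.
  rewrite /colv /= vm eqxx.
  by case: eqP => [h|//]; lia.
have vl : v < m by lia.
pose y := (c + m - v) %% m.
have yl : y < m by rewrite ltn_pmod.
have ey : (v + y) %% m = c.
  rewrite /y modnDmr.
  have -> : v + (c + m - v) = c + m by lia.
  by rewrite modnDr modn_small.
case: (eqVneq y v) => [yv|yv].
  exists [set v; Ordinal mn]; last by rewrite !inE eqxx.
  apply/McP; exists v, (Ordinal mn); split => //.
  rewrite /colv /= eqxx (negbTE vm) -ey yv.
  by rewrite mul2n addnn.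
have yn : y < n by lia.
exists [set v; Ordinal yn]; last by rewrite !inE eqxx.
apply/McP; exists v, (Ordinal yn); split => //.
  apply/negP => /eqP /(congr1 val) /= h; rewrite h eqxx in yv; by [].
rewrite /colv /= (negbTE vm).
by case: eqP => [h|_ //]; lia.
Qed.

Lemma Mc_ex n e : 1 < n -> e \in Kedges n -> exists c : 'I_n.-1, e \in Mc n c.
Proof.
move=> n1; rewrite inE => /cards2P [a [b [ab ->]]].
have m0 : 0 < n.-1 by lia.
exists (Ordinal (ltn_pmod (colv n.-1 a b) m0)).
apply/McP; exists a, b; split => //=; rewrite /colv; case: ifP => _; [|case: ifP => _]; by rewrite modn_mod.
Qed.

Lemma cardI_sum (T : finType) (A E : {set T}) : #|A :&: E| = \sum_(e in E) (e \in A).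
Proof.
rewrite -big_mkcondr /= sum1_card; apply: eq_card => x; by rewrite !inE andbC.
Qed.

Lemma sumcard n (E : {set {set 'I_n}}) : 1 < n -> E \subset Kedges n ->
  \sum_(c < n.-1) #|Mc n c :&: E| = #|E|.
Proof.
move=> n1 sE.
under eq_bigr => c _ do rewrite cardI_sum.
rewrite exchange_big /= -sum1_card; apply: eq_bigr => e eE.
have [c0 h0] := Mc_ex _ _ n1 (subsetP sE e eE).
rewrite (bigD1 c0) //= h0 big1 // => c nc.
case hc: (e \in Mc n c) => //; move: nc; rewrite -val_eqE /=.
by rewrite (Mc_uniq _ _ _ _ hc h0) eqxx.
Qed.

Lemma main n (E0 E1 E2 : {set {set 'I_n}}) : 0 < n -> ~~ odd n ->
  ordered_partition (Kedges n) E0 E1 E2 ->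
  #|E1| + 2 * #|E2| < 2 * n.-1 ->
  exists M : {set {set 'I_n}}, is_perfect_matching M /\ good_matching M E0 E1 E2.
Proof.
move=> n0 en [_ _ _ hU] hw.
have n1 : 1 < n by case: n n0 en {E0 E1 E2 hU hw} => [|[|]].
have om : odd n.-1 by case: n n0 en {E0 E1 E2 hU hw n1} => [|n'] //= _; rewrite negbK.
have s1 : E1 \subset Kedges n by rewrite -hU subsetU // subsetUr.
have s2 : E2 \subset Kedges n by rewrite -hU subsetUr.
case: (boolP [exists c : 'I_n.-1, (Mc n c :&: E2 == set0) && (#|Mc n c :&: E1| <= 1)]).
  case/existsP => c /andP [/eqP h2 h1].
  exists (Mc n c); split; last by [].
  split; first exact: Mc_match.
  by move=> v; apply: Mc_cover.
move/existsPn => H.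
have : \sum_(c < n.-1) 2 <= \sum_(c < n.-1) (#|Mc n c :&: E1| + 2 * #|Mc n c :&: E2|).
  apply: leq_sum => c _.
  have := H c; rewrite negb_and -ltnNge => /orP [h|h]; last by lia.
  rewrite -card_gt0 in h; lia.
move=> hs.
rewrite big_split /= -big_distrr /= !sumcard // sum_nat_const card_ord in hs.
lia.
Qed.

Theorem lemma11 (r k : nat) (E0 E1 E2 : {set {set 'I_(r + k)}}) :
  0 < r -> 0 < k -> ~~ odd (r + k) -> k <= r ->
  ordered_partition (Kedges (r + k)) E0 E1 E2 ->
  #|E1| + 2 * #|E2| < 2 * (r + k - 1) ->
  exists M : {set {set 'I_(r + k)}},
    is_perfect_matching M /\ good_matching M E0 E1 E2.
Proof.
move=> r0 k0 ev _ hp hw.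
apply: main => //; first by rewrite addn_gt0 r0.
by rewrite -subn1.
Qed.
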